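(* Let $\sigma,\widehat\sigma\in\Omega$ be such that the transition probability $\mathbb P(\widehat\sigma\to\sigma)$ in the auxiliary TASEP is positive. Then for each $\mu\in S_\lambda$, \[\sum_{\widehat\mu\in S_\lambda}\mathbb P\big((\widehat\mu,\widehat\sigma)\to(\mu,\sigma)\big)\,F_{\widehat\mu}(\widehat\sigma\boldsymbol\chi;t)=F_\mu(\sigma\boldsymbol\chi;t)\,\mathbb P(\widehat\sigma\to\sigma),\] where the transition probabilities on the left are those of $\blacktriangle\mathrm{ASEP}_\lambda$.
   Context: ASEP polynomials: $\lambda=(\lambda_1\le\cdots\le\lambda_n)$ nonnegative integers, $S_\lambda$ its rearrangements; $wy=(y_{w^{-1}(1)},\dots,y_{w^{-1}(n)})$ for $w\in\mathfrak S_n$, $(wf)(\mathbf x)=f(w\mathbf x)$; indices mod $n$; $\overline s_i$ ($i\in\mathbb Z/n\mathbb Z$) the transposition of $i,i+1$; $c=(1\,2\cdots n)$; $T_i=t-\frac{tx_i-x_{i+1}}{x_i-x_{i+1}}(1-\overline s_i)$. $(F_\mu(\mathbf x;t))_{\mu\in S_\lambda}$ is the unique family of homogeneous polynomials in $\mathbb C(t)[\mathbf x]$ with coefficient of $x_1^{\lambda_n-\lambda_1}\cdots x_n^{\lambda_n-\lambda_n}$ in $F_\lambda$ equal to $1$ and: $T_iF_\mu=F_{\overline s_i\mu}$ if $\mu_i<\mu_{i+1}$; $\overline s_iF_\mu=F_\mu$ if $\mu_i=\mu_{i+1}$; $cF_{c\mu}=F_\mu$. $\mathfrak f_r(k,k')=1$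 if $k>k'$, $r$ if $k<k'$, $0$ if $k=k'$. Stoned multispecies ASEP: $t\in[0,1)$; stones $\blacktriangle_1,\dots,\blacktriangle_n$, surjective densities $\varrho:\{\blacktriangle_j\}\to[m]$ ($m\ge2$) with $1=\varrho(\blacktriangle_1)\le\cdots\le\varrho(\blacktriangle_n)=m$. $\Omega$: the $\sigma\in\mathfrak S_n$ such that, for each density $k$, stones of density $k$ occur in the same cyclic order in $\blacktriangle_{\sigma^{-1}(1)},\dots,\blacktriangle_{\sigma^{-1}(n)}$ as in $\blacktriangle_1,\dots,\blacktriangle_n$. $\mathfrak K(\sigma)=\#\{i:\varrho(\blacktriangle_{\sigma^{-1}(i)})<\varrho(\blacktriangle_{\sigma^{-1}(i+1)})\}$. Auxiliary TASEP on $\Omega$: $\mathbb P(\sigma\to\overline s_i\sigma)=1/n$ if $\varrho(\blacktriangle_{\sigma^{-1}(i)})<\varrho(\blacktriangle_{\sigma^{-1}(i+1)})$, $\mathbb P(\sigma\to\sigma)=1-\mathfrak K(\sigma)/n$, others $0$. $\boldsymbol\chi=(\chi_1,\dots,\chi_n)$ nonzero reals with $p(j,j'):=\frac{\chi_j-\chi_{j'}}{t\chi_j-\chi_{j'}}\in[0,1)$ whenever $\varrho(\blacktriangle_j)<\varrho(\blacktriangle_{j'})$. $\blacktriangle\mathrm{ASEP}_\lambda$ on $S_\lambda\times\Omega$: if $\varrho(\blacktriangle_{\sigma^{-1}(i)})<\varrho(\blacktriangle_{\sigma^{-1}(i+1)})$ and $\mu_i\ne\mu_{i+1}$, then $\mathbb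 P((\mu,\sigma)\to(\overline s_i\mu,\overline s_i\sigma))=\frac1np(\sigma^{-1}(i),\sigma^{-1}(i+1))\mathfrak f_t(\mu_i,\mu_{i+1})$ and $\mathbb P((\mu,\sigma)\to(\mu,\overline s_i\sigma))=\frac1n[1-p(\sigma^{-1}(i),\sigma^{-1}(i+1))\mathfrak f_t(\mu_i,\mu_{i+1})]$; if the density condition holds and $\mu_i=\mu_{i+1}$, $\mathbb P((\mu,\sigma)\to(\mu,\overline s_i\sigma))=\frac1n$; $\mathbb P((\mu,\sigma)\to(\mu,\sigma))=1-\mathfrak K(\sigma)/n$; all others $0$. *)

(* Defs.v *)
From HB Require Import structures.
From mathcomp Require Import all_boot all_order all_algebra all_fingroup.
From mathcomp Require Import fraction mpoly complex.
From Stdlib Require Import ClassicalEpsilon.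

Set Implicit Arguments.
Unset Strict Implicit.
Unset Printing Implicit Defensive.

Import Order.TTheory GRing.Theory Num.Theory.
Local Open Scope ring_scope.

Local Notation "x %:F" := (FracField.tofrac x).

(* C(t) : rational functions in the indeterminate t over C = R[i]. *)
Definition Kt (R : rcfType) := {fraction {poly complex R}}.

Definition tK (R : rcfType) : Kt R := ('X : {poly complex R})%:F.

Definition regular_at (R : rcfType) (c : complex R) (r : Kt R) : Prop :=
  exists pq : {poly complex R} * {poly complex R},
    pq.2.[c] != 0 /\ r = pq.1%:F / pq.2%:F.

Definition eval_at (R : rcfType) (c : complex R) (r : Kt R) : complex R :=
  let pq := epsilon (inhabits (0, 1))
     (fun pq : {poly complex R} * {poly complex R} =>
        pq.2.[c] != 0 /\ r = pq.1%:F / pq.2%:F) in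
  pq.1.[c] / pq.2.[c].

(* F(v ; c) for F in C(t)[x_1..x_n], v in C^n, c in C *)
Definition evalF (R : rcfType) (n : nat) (c : complex R) (v : 'I_n -> complex R)
  (p : {mpoly Kt R [n]}) : complex R :=
  \sum_(m <- msupp p) eval_at c p@_m * \prod_(i < n) v i ^+ m i.

(* Actions of permutations (indices are 0-based and taken mod n)       *)

Definition sbar (n : nat) (i : 'I_n) : 'S_n := tperm i (ordS i).

Definition cyc (n : nat) : 'S_n := perm (@ordS_inj n).

Definition sact (n : nat) (w : 'S_n) (mu : seq nat) : seq nat :=
  [seq nth 0%N mu (w^-1%g i) | i <- enum 'I_n].

(* (w f)(x) = f(w x) *)
Definition pact (R : rcfType) (n : nat) (w : 'S_n) (f : {mpoly Kt R [n]}) :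
  {mpoly Kt R [n]} :=
  f \mPo [tuple 'X_(w^-1%g i) | i < n].

(* T_i f = g, with the denominator x_i - x_{i+1} cleared:
   T_i f = t f - (t x_i - x_{i+1})/(x_i - x_{i+1}) (f - sbar_i f) *)
Definition Trel (R : rcfType) (n : nat) (i : 'I_n) (f g : {mpoly Kt R [n]}) : Prop :=
  ('X_i - 'X_(ordS i)) * ((tK R)%:MP * f - g)
  = ((tK R)%:MP * 'X_i - 'X_(ordS i)) * (f - pact (sbar i) f).

Definition asep_family (R : rcfType) (n : nat) (lambda : seq nat)
  (F : seq nat -> {mpoly Kt R [n]}) : Prop :=
  [/\ forall mu, perm_eq mu lambda -> exists d, F mu \is d.-homog,
      (F lambda)@_[multinom (nth 0 lambda n.-1 - nth 0 lambda i)%N | i < n] = 1,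
      forall mu (i : 'I_n), perm_eq mu lambda ->
        (nth 0 mu i < nth 0 mu (ordS i))%N ->
        Trel i (F mu) (F (sact (sbar i) mu)),
      forall mu (i : 'I_n), perm_eq mu lambda ->
        nth 0 mu i = nth 0 mu (ordS i) -> pact (sbar i) (F mu) = F mu
    & forall mu, perm_eq mu lambda -> pact (cyc n) (F (sact (cyc n) mu)) = F mu].

(* sigma in Omega: for each density k, the stones of density k occur in
   the same cyclic order in (stone_{sigma^-1(1)},...,stone_{sigma^-1(n)})
   as in (stone_1, ..., stone_n), i.e. the two subsequences are rotations *)
Definition in_Omega (n : nat) (rho : 'I_n -> nat) (s : 'S_n) : Prop :=
  forall k : nat, exists r : nat,
    [seq j <- [seq s^-1%g i | i <- enum 'I_n] | rho j == k]
    = rot r [seq j <- enum 'I_n | rho j == k].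

Definition asc (n : nat) (rho : 'I_n -> nat) (s : 'S_n) (i : 'I_n) : bool :=
  (rho (s^-1%g i) < rho (s^-1%g (ordS i)))%N.

Definition Kcount (n : nat) (rho : 'I_n -> nat) (s : 'S_n) : nat :=
  #|[set i | asc rho s i]|.

(* sbar_i sigma (composition of maps; mathcomp's s * t is "s then t") *)
Definition lmul (n : nat) (i : 'I_n) (s : 'S_n) : 'S_n := (s * sbar i)%g.

Definition aux_prob (R : rcfType) (n : nat) (rho : 'I_n -> nat) (s s' : 'S_n) : R :=
  (if s' == s then 1 - (Kcount rho s)%:R / n%:R else 0)
  + \sum_(i < n | asc rho s i) (if s' == lmul i s then n%:R^-1 else 0).

Definition pfun (R : rcfType) (n : nat) (t : R) (chi : 'I_n -> R) (j j' : 'I_n) : R :=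
  (chi j - chi j') / (t * chi j - chi j').

Definition ff (R : rcfType) (r : R) (k k' : nat) : R :=
  if (k' < k)%N then 1 else if (k < k')%N then r else 0.

Definition asep_prob (R : rcfType) (n : nat) (rho : 'I_n -> nat) (chi : 'I_n -> R)
  (t : R) (mh : seq nat) (sh : 'S_n) (mu : seq nat) (s : 'S_n) : R :=
  (if (mu == mh) && (s == sh) then 1 - (Kcount rho sh)%:R / n%:R else 0)
  + \sum_(i < n | asc rho sh i)
      (let p := pfun t chi (sh^-1%g i) (sh^-1%g (ordS i)) in
       let a := nth 0%N mh i in
       let b := nth 0%N mh (ordS i) in
       if a != b then
         (if (mu == sact (sbar i) mh) && (s == lmul i sh)
          then n%:R^-1 * p * ff t a b else 0)
         + (if (mu == mh) && (s == lmul i sh)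
            then n%:R^-1 * (1 - p * ff t a b) else 0)
       else (if (mu == mh) && (s == lmul i sh) then n%:R^-1 else 0)).

Definition spt (R : rcfType) (n : nat) (chi : 'I_n -> R) (s : 'S_n) : 'I_n -> complex R :=
  fun i => (chi (s^-1%g i))%:C%C.

(* Main.v *)
Require Import Defs.
From HB Require Import structures.
From mathcomp Require Import all_boot all_order all_algebra all_fingroup.
From mathcomp Require Import fraction mpoly complex.
From Stdlib Require Import ClassicalEpsilon.
From mathcomp Require Import ring zify ssrcomplements.

Set Implicit Arguments.
Unset Strict Implicit.
Unset Printing Implicit Defensive.

Import Order.TTheory GRing.Theory Num.Theory.
Local Open Scope ring_scope.
Local Notation "x %:F" := (FracField.tofrac x).
Section EvalAt.
Variables (R : rcfType) (c : complex R).
Local Notation P := {poly complex R}.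

Lemma eval_atE (p q : P) : q.[c] != 0 -> eval_at c (p%:F / q%:F) = p.[c] / q.[c].
Proof.
move=> qc; rewrite /eval_at.
set Pr := (fun pq : P * P => pq.2.[c] != 0 /\ p%:F / q%:F = pq.1%:F / pq.2%:F).
have := @epsilon_spec _ (inhabits (0, 1)) Pr (ex_intro _ (p, q) (conj qc erefl)).
set pq := epsilon _ _ => -[H1 H2].
have q0 : q != 0 by apply: contraNneq qc => ->; rewrite horner0.
have q20 : pq.2 != 0 by apply: contraNneq H1 => ->; rewrite horner0.
have E : p * pq.2 = pq.1 * q.
  apply/eqP; rewrite -tofrac_eq !tofracM -eqr_div ?tofrac_eq0 //.
  by rewrite H2.
by apply/eqP; rewrite eqr_div // -!hornerM E.
Qed.

Lemma reg_poly (p : P) : regular_at c p%:F.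
Proof. by exists (p, 1); rewrite /= hornerC oner_neq0 tofrac1 divr1. Qed.

Lemma eval_poly (p : P) : eval_at c p%:F = p.[c].
Proof.
have -> : p%:F = p%:F / 1%:F by rewrite tofrac1 divr1.
by rewrite eval_atE ?hornerC ?oner_neq0 // divr1.
Qed.

Lemma reg_add r1 r2 : regular_at c r1 -> regular_at c r2 ->
  regular_at c (r1 + r2) /\ eval_at c (r1 + r2) = eval_at c r1 + eval_at c r2.
Proof.
move=> [[p1 q1] /= [h1 ->]] [[p2 q2] /= [h2 ->]].
have q10 : q1 != 0 by apply: contraNneq h1 => ->; rewrite horner0.
have q20 : q2 != 0 by apply: contraNneq h2 => ->; rewrite horner0.
have q10' : q1%:F != 0 by rewrite tofrac_eq0.
have q20' : q2%:F != 0 by rewrite tofrac_eq0.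
have E : p1%:F / q1%:F + p2%:F / q2%:F = (p1 * q2 + p2 * q1)%:F / (q1 * q2)%:F.
  rewrite tofracD !tofracM; exact: (@addf_div {fraction {poly complex R}} _ _ _ _ q10' q20').
have hq : (q1 * q2).[c] != 0 by rewrite hornerM mulf_neq0.
split; first by exists (p1 * q2 + p2 * q1, q1 * q2).
by rewrite E !eval_atE // hornerD !hornerM addf_div.
Qed.

Lemma reg_mul r1 r2 : regular_at c r1 -> regular_at c r2 ->
  regular_at c (r1 * r2) /\ eval_at c (r1 * r2) = eval_at c r1 * eval_at c r2.
Proof.
move=> [[p1 q1] /= [h1 ->]] [[p2 q2] /= [h2 ->]].
have q10 : q1 != 0 by apply: contraNneq h1 => ->; rewrite horner0.
have q20 : q2 != 0 by apply: contraNneq h2 => ->; rewrite horner0.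
have q10' : q1%:F != 0 by rewrite tofrac_eq0.
have q20' : q2%:F != 0 by rewrite tofrac_eq0.
have E : p1%:F / q1%:F * (p2%:F / q2%:F) = (p1 * p2)%:F / (q1 * q2)%:F.
  rewrite !tofracM; exact: (@mulf_div {fraction {poly complex R}} _ _ _ _).
have hq : (q1 * q2).[c] != 0 by rewrite hornerM mulf_neq0.
split; first by exists (p1 * p2, q1 * q2).
by rewrite E !eval_atE // !hornerM mulf_div.
Qed.

Lemma reg_opp r : regular_at c r ->
  regular_at c (- r) /\ eval_at c (- r) = - eval_at c r.
Proof.
move=> hr; have := reg_mul (reg_poly (-1)) hr.
by rewrite eval_poly hornerN hornerC mulN1r tofracN tofrac1 !mulN1r.
Qed.

Lemma reg0 : regular_at c 0.
Proof. by rewrite -tofrac0; apply: reg_poly. Qed.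
Lemma eval0 : eval_at c 0 = 0.
Proof. by rewrite -tofrac0 eval_poly horner0. Qed.

End EvalAt.
Section EvalF.
Variables (R : rcfType) (c : complex R) (n : nat).
Local Notation K := (Kt R).
Implicit Types (p q : {mpoly K[n]}).

Definition regP p := forall m, regular_at c p@_m.

Lemma reg1 : regular_at c 1.
Proof. by rewrite -tofrac1; apply: reg_poly. Qed.
Lemma eval1 : eval_at c 1 = 1.
Proof. by rewrite -tofrac1 eval_poly hornerC. Qed.

Lemma reg_nat (b : bool) : regular_at c (b%:R).
Proof. by case: b; [apply: reg1 | apply: reg0]. Qed.

Lemma reg_sum (I : Type) (r : seq I) (P : pred I) (G : I -> K) :
  (forall i, P i -> regular_at c (G i)) -> regular_at c (\big[+%R/0]_(i <- r | P i) G i).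
Proof.
move=> h; apply: big_ind => //; first exact: reg0.
by move=> x y hx hy; case: (reg_add hx hy).
Qed.

Lemma regP_add p q : regP p -> regP q -> regP (p + q).
Proof. by move=> hp hq m; rewrite mcoeffD; case: (reg_add (hp m) (hq m)). Qed.
Lemma regP_opp p : regP p -> regP (- p).
Proof. by move=> hp m; rewrite mcoeffN; case: (reg_opp (hp m)). Qed.
Lemma regP_sub p q : regP p -> regP q -> regP (p - q).
Proof. by move=> hp hq; apply: regP_add => //; apply: regP_opp. Qed.
Lemma regP_mul p q : regP p -> regP q -> regP (p * q).
Proof.
move=> hp hq m; rewrite mcoeffM; apply: reg_sum => i _.
by case: (reg_mul (hp i.1) (hq i.2)).
Qed.
Lemma regP_C a : regular_at c a -> regP a%:MP.
Proof.
move=> ha m; rewrite mcoeffC.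
by case: (m == 0%MM); [rewrite mulr1 | rewrite mulr0; apply: reg0].
Qed.
Lemma regP_Xm (m : 'X_{1..n}) : regP 'X_[m].
Proof. by move=> m'; rewrite mcoeffX; apply: reg_nat. Qed.
Lemma regP_X (i : 'I_n) : regP 'X_i.
Proof. exact: regP_Xm. Qed.
Lemma regP_1 : regP 1.
Proof. by apply: regP_C; apply: reg1. Qed.

Variable v : 'I_n -> complex R.
Local Notation ev := (evalF c v).
Local Notation mm m := (\prod_(i < n) v i ^+ (m : 'X_{1..n}) i).

Lemma evalFE p k : (msize p <= k)%N ->
  ev p = \sum_(m : 'X_{1..n < k}) eval_at c p@_m * mm m.
Proof.
move=> le_pi; set I : subFinType _ := 'X_{1..n < k}.
rewrite /evalF (big_mksub I) ?msupp_uniq //=; first last.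
  by move=> x /msize_mdeg_lt /leq_trans; apply.
rewrite big_rmcond //= => j /memN_msupp_eq0 ->.
by rewrite eval0 mul0r.
Qed.

Lemma evalF_add p q : regP p -> regP q -> ev (p + q) = ev p + ev q.
Proof.
move=> hp hq; set k := (msize p + msize q + msize (p + q))%N.
rewrite !(evalFE (k := k)) /k; try lia.
rewrite -big_split; apply: eq_bigr => i _.
by rewrite mcoeffD (reg_add (hp i) (hq i)).2 mulrDl.
Qed.

Lemma evalF_opp p : regP p -> ev (- p) = - ev p.
Proof.
move=> hp; set k := (msize p + msize (- p))%N.
rewrite !(evalFE (k := k)) /k; try lia; rewrite -sumrN.
apply: eq_bigr => i _.
by rewrite mcoeffN (reg_opp (hp i)).2 mulNr.
Qed.

Lemma evalF_sub p q : regP p -> regP q -> ev (p - q) = ev p - ev q.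
Proof.
by move=> hp hq; rewrite evalF_add ?evalF_opp //; apply: regP_opp.
Qed.

Lemma evalF_sum (I : Type) (r : seq I) (P : pred I) (G : I -> {mpoly K[n]}) :
  (forall i, P i -> regP (G i)) ->
  ev (\sum_(i <- r | P i) G i) = \sum_(i <- r | P i) ev (G i).
Proof.
move=> h.
pose Q := fun x y => regP x /\ ev x = y.
suff : Q (\sum_(i <- r | P i) G i) (\sum_(i <- r | P i) ev (G i)) by case.
apply: (big_ind2 Q).
- split; first by apply: regP_C; apply: reg0.
  by rewrite /evalF msupp0 big_nil.
- move=> x1 x2 y1 y2 [h1 <-] [h2 <-]; split; first exact: regP_add.
  exact: evalF_add.
- by move=> i Pi; split => //; apply: h.
Qed.

Lemma evalF_ZX a (m : 'X_{1..n}) : regular_at c a -> ev (a *: 'X_[m]) = eval_at c a * mm m.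
Proof.
move=> ha; have [->|a0] := eqVneq a 0.
  by rewrite scale0r /evalF msupp0 big_nil eval0 mul0r.
by rewrite /evalF msuppMCX // big_seq1 mcoeffZ mcoeffX eqxx mulr1.
Qed.

Lemma mm_add (m1 m2 : 'X_{1..n}) : mm (m1 + m2)%MM = mm m1 * mm m2.
Proof.
rewrite -big_split /=; apply: eq_bigr => i _.
by rewrite mnmDE exprD.
Qed.

Lemma evalF_mul p q : regP p -> regP q -> ev (p * q) = ev p * ev q.
Proof.
move=> hp hq; set k := (msize p + msize q)%N.
rewrite (mpolywME (k := k)) /k; try lia.
rewrite evalF_sum; last first.
  move=> i _ m'; rewrite mcoeffZ mcoeffX.
  case: (_ == _); last by rewrite mulr0; apply: reg0.
  by rewrite mulr1; case: (reg_mul (hp i.1) (hq i.2)).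
rewrite !(evalFE (k := k)) /k; try lia.
rewrite big_distrlr /= pair_bigA; apply/eq_bigr => /= -[j1 j2] _ /=.
rewrite evalF_ZX; last by case: (reg_mul (hp j1) (hq j2)).
rewrite (reg_mul (hp j1) (hq j2)).2 mm_add.
by rewrite mulrA -(mulrA (eval_at c _)) [X in _ * X * _]mulrC !mulrA.
Qed.

Lemma evalF_C a : regular_at c a -> ev a%:MP = eval_at c a.
Proof.
move=> ha; rewrite -[a%:MP]mulr1 mul_mpolyC.
have -> : (1 : {mpoly K[n]}) = 'X_[0%MM] by rewrite mpolyX0.
rewrite evalF_ZX // big1 ?mulr1 // => i _.
by rewrite mnm0E expr0.
Qed.

Lemma evalF_X (i : 'I_n) : ev 'X_i = v i.
Proof.
rewrite -[X in ev X]scale1r evalF_ZX; last exact: reg1.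
by rewrite eval1 mul1r; exact: (mmap1U v i).
Qed.

End EvalF.
Section EvalPact.
Variables (R : rcfType) (c : complex R) (n : nat).
Local Notation K := (Kt R).
Implicit Types (p q : {mpoly K[n]}).

Lemma regP_sum (I : Type) (r : seq I) (P : pred I) (G : I -> {mpoly K[n]}) :
  (forall i, P i -> regP c (G i)) -> regP c (\sum_(i <- r | P i) G i).
Proof.
move=> h; apply: big_ind => //.
- by apply: regP_C; apply: reg0.
- by move=> x y; apply: regP_add.
Qed.

Lemma regP_exp p k : regP c p -> regP c (p ^+ k).
Proof.
move=> hp; elim: k => [|k IH]; first by rewrite expr0; apply: regP_1.
by rewrite exprS; apply: regP_mul.
Qed.

Lemma evalF_exp v p k : regP c p -> evalF c v (p ^+ k) = evalF c v p ^+ k.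
Proof.
move=> hp; elim: k => [|k IH].
  by rewrite !expr0 -[1]/(1%:MP) evalF_C ?eval1 //; apply: reg1.
by rewrite !exprS evalF_mul ?IH //; apply: regP_exp.
Qed.

Lemma evalF_prod v (I : Type) (r : seq I) (P : pred I) (G : I -> {mpoly K[n]}) :
  (forall i, P i -> regP c (G i)) ->
  regP c (\prod_(i <- r | P i) G i) /\
  evalF c v (\prod_(i <- r | P i) G i) = \prod_(i <- r | P i) evalF c v (G i).
Proof.
move=> h.
apply: (big_ind2 (fun x y => regP c x /\ evalF c v x = y)).
- split; first exact: regP_1.
  by rewrite -[1]/(1%:MP) evalF_C ?eval1 //; apply: reg1.
- move=> x1 x2 y1 y2 [h1 <-] [h2 <-]; split; first exact: regP_mul.
  exact: evalF_mul.
- by move=> i Pi; split => //; apply: h.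
Qed.

Lemma evalF_pact v (w : 'S_n) f : regP c f ->
  regP c (pact w f) /\ evalF c v (pact w f) = evalF c (fun i => v (w^-1%g i)) f.
Proof.
move=> hf.
have E : pact w f = \sum_(m <- msupp f)
   (f@_m)%:MP * \prod_(i < n) ('X_(w^-1%g i))^+(m i).
  rewrite /pact comp_mpolyE; apply: eq_bigr => m _.
  rewrite mul_mpolyC; congr (_ *: _); apply: eq_bigr => i _.
  by rewrite tnth_mktuple.
have hP : forall m : 'X_{1..n}, regP c (\prod_(i < n) ('X_(w^-1%g i) : {mpoly K[n]})^+(m i)).
  move=> m.
  have hx : forall i, xpredT i -> regP c (('X_(w^-1%g i) : {mpoly K[n]})^+(m i)).
    by move=> i _; apply: regP_exp; apply: regP_X.
  have [h1 _] := (@evalF_prod v _ (index_enum 'I_n) xpredT (fun i => ('X_(w^-1%g i) : {mpoly K[n]})^+(m i)) hx).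
  exact: h1.
have hT : forall m : 'X_{1..n}, regP c ((f@_m)%:MP * \prod_(i < n) ('X_(w^-1%g i) : {mpoly K[n]})^+(m i)).
  move=> m; apply: regP_mul; [apply: regP_C; exact: hf | exact: hP].
rewrite E; split; first by apply: regP_sum => m _; exact: hT.
rewrite evalF_sum; last by move=> m _; exact: hT.
rewrite /evalF; apply: eq_bigr => m _.
rewrite -/(evalF c v _) evalF_mul; [|apply: regP_C; exact: hf|exact: hP].
rewrite evalF_C; last exact: hf.
congr (_ * _).
have hx : forall i, xpredT i -> regP c (('X_(w^-1%g i) : {mpoly K[n]})^+(m i)).
  by move=> i _; apply: regP_exp; apply: regP_X.
rewrite (@evalF_prod v _ (index_enum 'I_n) xpredT (fun i => ('X_(w^-1%g i) : {mpoly K[n]})^+(m i)) hx).2.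
apply: eq_bigr => i _; rewrite evalF_exp; last exact: regP_X.
by rewrite evalF_X.
Qed.

End EvalPact.
Section TrelEval.
Variables (R : rcfType) (t : R) (n : nat).
Local Notation c := ((t%:C)%C : complex R).
Local Notation K := (Kt R).

Lemma reg_tK : regular_at c (tK R).
Proof. exact: reg_poly. Qed.
Lemma eval_tK : eval_at c (tK R) = c.
Proof. by rewrite /tK eval_poly hornerX. Qed.

Lemma evalF_ext (z z' : 'I_n -> complex R) (f : {mpoly K[n]}) :
  (forall i, z i = z' i) -> evalF c z f = evalF c z' f.
Proof.
move=> h; apply: eq_bigr => m _; congr (_ * _); apply: eq_bigr => i _.
by rewrite h.
Qed.

Lemma Trel_eval (z : 'I_n -> complex R) (i : 'I_n) (f g : {mpoly K[n]}) :
  regP c f -> regP c g -> Trel i f g ->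
  (z i - z (ordS i)) * (c * evalF c z f - evalF c z g)
  = (c * z i - z (ordS i)) * (evalF c z f - evalF c (fun k => z (sbar i k)) f).
Proof.
move=> hf hg.
rewrite /Trel => /(congr1 (evalF c z)).
have hX : forall j : 'I_n, regP c ('X_j : {mpoly K[n]}) by move=> j; apply: regP_X.
have hT : regP c ((tK R)%:MP : {mpoly K[n]}) by apply: regP_C; apply: reg_tK.
have hTf : regP c ((tK R)%:MP * f) by apply: regP_mul; [exact: hT | exact: hf].
have hTX : regP c ((tK R)%:MP * 'X_i) by apply: regP_mul; [exact: hT | exact: hX].
have [hpf epf] := evalF_pact z (sbar i) hf.
have hS1 : regP c ('X_i - 'X_(ordS i) : {mpoly K[n]}) by apply: regP_sub; [exact: hX | exact: hX].
have hS2 : regP c ((tK R)%:MP * f - g) by apply: regP_sub; [exact: hTf | exact: hg].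
have hS3 : regP c ((tK R)%:MP * 'X_i - 'X_(ordS i)) by apply: regP_sub; [exact: hTX | exact: hX].
have hS4 : regP c (f - pact (sbar i) f) by apply: regP_sub; [exact: hf | exact: hpf].
rewrite (evalF_mul z hS1 hS2) (evalF_mul z hS3 hS4).
rewrite (evalF_sub z (hX i) (hX (ordS i))) (evalF_sub z hTf hg) (evalF_sub z hTX (hX (ordS i))) (evalF_sub z hf hpf).
rewrite (evalF_mul z hT hf) (evalF_mul z hT (hX i)).
rewrite !evalF_X evalF_C; last exact: reg_tK.
rewrite eval_tK epf => ->; congr (_ * (_ - _)).
apply: evalF_ext => k; congr (z _).
by rewrite /sbar tpermV.
Qed.

End TrelEval.
Section Alg.
Variable (F : fieldType).

Lemma alg_lt (c u v p A B A' : F) :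
  p * (c * u - v) = u - v -> c * u - v != 0 ->
  (u - v) * (c * A - B) = (c * u - v) * (A - A') ->
  (1 - p * c) * A + p * B = A'.
Proof.
move=> K0 hn E1; apply/eqP; rewrite -subr_eq0.
have : (c * u - v) * ((1 - p * c) * A + p * B - A') = 0.
  have -> : (c * u - v) * ((1 - p * c) * A + p * B - A') =
    ((c * u - v) * (A - A') - (u - v) * (c * A - B))
    - (c * A - B) * (p * (c * u - v) - (u - v)) by ring.
  by rewrite E1 K0 !subrr !mulr0 subr0.
by move/eqP; rewrite mulf_eq0 (negbTE hn).
Qed.

Lemma alg_gt (c u v p A B A' B' : F) :
  p * (c * u - v) = u - v -> u - v != 0 ->
  (u - v) * (c * B - A) = (c * u - v) * (B - B') ->
  (v - u) * (c * B' - A') = (c * v - u) * (B' - B) ->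
  (1 - p) * A + p * c * B = A'.
Proof.
move=> K0 hn E1 E2.
have hB' : B' = B - p * (c * B - A).
  apply/eqP; rewrite -subr_eq0.
  have : (u - v) * (B' - (B - p * (c * B - A))) = 0.
    have -> : (u - v) * (B' - (B - p * (c * B - A))) =
      p * ((u - v) * (c * B - A) - (c * u - v) * (B - B'))
      + (B - B') * (p * (c * u - v) - (u - v)) by ring.
    by rewrite E1 K0 !subrr !mulr0 addr0.
  by move/eqP; rewrite mulf_eq0 (negbTE hn).
rewrite hB' in E2.
have hn' : v - u != 0 by rewrite -opprB oppr_eq0.
apply/eqP; rewrite -subr_eq0.
have : (v - u) * ((1 - p) * A + p * c * B - A') = 0.
  have -> : (v - u) * ((1 - p) * A + p * c * B - A') =
    ((v - u) * (c * (B - p * (c * B - A)) - A') - (c * v - u) * (B - p * (c * B - A) - B))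
    + (A - c * B) * (p * (c * u - v) - (u - v)) by ring.
  by rewrite E2 K0 !subrr !mulr0 addr0.
by move/eqP; rewrite mulf_eq0 (negbTE hn').
Qed.

End Alg.

Section Comb.
Variable n : nat.

Lemma size_sact (w : 'S_n) (x : seq nat) : size (sact w x) = n.
Proof. by rewrite /sact size_map size_enum_ord. Qed.

Lemma nth_sact (w : 'S_n) (x : seq nat) (k : 'I_n) :
  nth 0%N (sact w x) k = nth 0%N x (w^-1%g k).
Proof.
rewrite /sact (nth_map k); last by rewrite size_enum_ord.
by rewrite nth_ord_enum.
Qed.

Lemma sbarV (i : 'I_n) : ((sbar i)^-1)%g = sbar i.
Proof. by rewrite /sbar tpermV. Qed.

Lemma sact_sbarK (i : 'I_n) (x : seq nat) : size x = n ->
  sact (sbar i) (sact (sbar i) x) = x.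
Proof.
move=> sx; apply: (@eq_from_nth _ 0%N); first by rewrite size_sact sx.
move=> k; rewrite size_sact => hk.
have -> : k = nat_of_ord (Ordinal hk) by [].
by rewrite !nth_sact sbarV /sbar tpermK.
Qed.

Lemma perm_sact (w : 'S_n) (x : seq nat) : size x = n -> perm_eq (sact w x) x.
Proof.
move=> sx.
have ex : x = [seq nth 0%N x i | i : 'I_n <- enum 'I_n].
  apply: (@eq_from_nth _ 0%N); first by rewrite size_map size_enum_ord.
  move=> k hk; rewrite sx in hk.
  rewrite (nth_map (Ordinal hk)) ?size_enum_ord //.
  by rewrite -[X in nth _ (enum _) X]/(nat_of_ord (Ordinal hk)) nth_ord_enum.
rewrite {2}ex /sact.
have -> : [seq nth 0%N x (w^-1%g i) | i <- enum 'I_n] =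
          [seq nth 0%N x i | i : 'I_n <- [seq (w^-1)%g i | i <- enum 'I_n]].
  by elim: (enum 'I_n) => //= a l ->.
apply: perm_map; apply: uniq_perm.
- by rewrite map_inj_uniq ?enum_uniq //; apply: perm_inj.
- exact: enum_uniq.
- by move=> z; rewrite mem_enum; apply/mapP; exists (w z); rewrite ?mem_enum ?permK.
Qed.


End Comb.
Lemma sum_pick (C : ringType) (T : eqType) (r : seq T) (x : T) (a : C) (G : T -> C) :
  uniq r -> x \in r ->
  \sum_(y <- r) (if y == x then a else 0) * G y = a * G x.
Proof.
move=> ur xr; rewrite (big_rem x) //= eqxx big1_seq ?addr0 // => y /andP[_ hy].
by move: hy; rewrite mem_rem_uniq // => /andP[/negbTE -> _]; rewrite mul0r.
Qed.

Section Lmul.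
Variables (n : nat) (rho : 'I_n -> nat) (sh : 'S_n).

Lemma sbar_i (i : 'I_n) : sbar i i = ordS i.
Proof. by rewrite /sbar tpermL. Qed.

Lemma asc_neq (i : 'I_n) : asc rho sh i -> i != ordS i.
Proof.
rewrite /asc; apply: contraTneq => <-; by rewrite ltnn.
Qed.

Lemma lmul_neq (i : 'I_n) : asc rho sh i -> lmul i sh != sh.
Proof.
move=> h; apply/eqP => /(congr1 (fun p : 'S_n => p ((sh^-1)%g i))).
rewrite /lmul permM permKV sbar_i => e.
by move: (asc_neq h); rewrite e eqxx.
Qed.

Lemma lmul_uniq (i j : 'I_n) : asc rho sh i -> asc rho sh j ->
  lmul i sh = lmul j sh -> i = j.
Proof.
move=> hi hj e.
have es : sbar i = sbar j by move: e; rewrite /lmul; apply: mulgI.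
apply/eqP; apply/negP => nij.
have := congr1 (fun p : 'S_n => p i) es; rewrite sbar_i /sbar.
case: tpermP => [ei|ei|_ _]; first by move: nij; rewrite ei eqxx.
- move=> ej.
  move: hi hj; rewrite /asc ej -ei => h1 h2.
  by move: (ltn_trans h1 h2); rewrite ltnn.
- by move=> e'; move: (asc_neq hi); rewrite e' eqxx.
Qed.

End Lmul.
Unset Implicit Arguments.

Theorem lemma4p4 (R : rcfType) (n m : nat) (rho : 'I_n -> nat) (chi : 'I_n -> R)
  (t : R) (lambda : seq nat) (F : seq nat -> {mpoly Kt R [n]})
  (sigma sigmah : 'S_n) (mu : seq nat) :
  (* densities *)
  (2 <= m)%N ->
  (forall j, 1 <= rho j <= m)%N ->
  (forall k, (1 <= k <= m)%N -> exists j, rho j = k) ->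
  (forall j j' : 'I_n, (j <= j')%N -> (rho j <= rho j')%N) ->
  (forall j : 'I_n, val j = 0%N -> rho j = 1%N) ->
  (forall j : 'I_n, val j = n.-1 -> rho j = m) ->
  (* parameters *)
  0 <= t < 1 ->
  (forall j, chi j != 0) ->
  (forall j j', (rho j < rho j')%N ->
     t * chi j - chi j' != 0 /\ 0 <= pfun t chi j j' < 1) ->
  (* lambda and its ASEP polynomials *)
  size lambda = n -> sorted leq lambda ->
  asep_family lambda F ->
  (forall nu, perm_eq nu lambda -> forall mm, regular_at (t%:C)%C (F nu)@_mm) ->
  (* the statement *)
  in_Omega rho sigma -> in_Omega rho sigmah ->
  0 < aux_prob R rho sigmah sigma ->
  perm_eq mu lambda ->
  \sum_(mh <- permutations lambda)
     (asep_prob rho chi t mh sigmah mu sigma)%:C%C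
       * evalF (t%:C)%C (spt chi sigmah) (F mh)
  = evalF (t%:C)%C (spt chi sigma) (F mu) * (aux_prob R rho sigmah sigma)%:C%C.
Proof.
move=> _ _ _ _ _ _ /andP[t0 t1] hchi hpf szl _ [_ _ HT HS _] Hreg _ _ Haux Hmu.
have szmu : size mu = n by rewrite (perm_size Hmu).
have regF : forall nu, perm_eq nu lambda -> regP (t%:C)%C (F nu).
  by move=> nu h mm; apply: Hreg.
have uP := permutations_uniq lambda.
case: (eqVneq sigma sigmah) => [Es | Ns].
-
  rewrite Es.
  have Eaux : aux_prob R rho sigmah sigmah = 1 - (Kcount rho sigmah)%:R / n%:R.
    rewrite /aux_prob eqxx big1 ?addr0 // => i hi.
    by rewrite eq_sym (negbTE (lmul_neq hi)).
  have Eas : forall mh, (asep_prob rho chi t mh sigmah mu sigmah)%:C%C =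
      if mh == mu then ((1 - (Kcount rho sigmah)%:R / n%:R)%:C)%C else 0.
    move=> mh; rewrite /asep_prob eqxx andbT eq_sym big1 ?addr0.
      by case: ifP => _ //; rewrite rmorph0.
    move=> i hi.
    have hn : (sigmah == lmul i sigmah) = false by rewrite eq_sym (negbTE (lmul_neq hi)).
    by rewrite /= !hn !andbF; case: ifP => _; rewrite ?addr0.
  rewrite (eq_bigr (fun mh => (if mh == mu then ((1 - (Kcount rho sigmah)%:R / n%:R)%:C)%C else 0)
       * evalF (t%:C)%C (spt chi sigmah) (F mh))); last by move=> mh _; rewrite Eas.
  by rewrite sum_pick ?mem_permutations // Eaux mulrC.
have [i0 [hasc Es]] : exists i0, asc rho sigmah i0 /\ sigma = lmul i0 sigmah.
  move: Haux; rewrite /aux_prob (negbTE Ns) add0r.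
  case: (pickP (fun i => asc rho sigmah i && (sigma == lmul i sigmah))) => [i /andP[h1 /eqP h2] | H].
    by move=> _; exists i.
  rewrite big1 ?ltxx // => i hi.
  by have := H i; rewrite hi /= => ->.
rewrite Es.
have Eaux : aux_prob R rho sigmah (lmul i0 sigmah) = n%:R^-1.
  rewrite /aux_prob (negbTE (lmul_neq hasc)) add0r (bigD1 i0) //= eqxx big1 ?addr0 //.
  move=> j /andP[hj nj]; case: eqP => // e.
  by move: nj; rewrite (lmul_uniq hasc hj e) eqxx.
pose a := nth 0%N mu i0.
pose b := nth 0%N mu (ordS i0).
pose nu := sact (sbar i0) mu.
pose p := pfun t chi (sigmah^-1%g i0) (sigmah^-1%g (ordS i0)).
pose al := if a != b then n%:R^-1 * (1 - p * ff t a b) else n%:R^-1.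
pose be := if a != b then n%:R^-1 * p * ff t b a else 0.
have nuP : perm_eq nu lambda by apply: perm_trans Hmu; apply: perm_sact.
have szn : size nu = n by rewrite size_sact.
have nth_nu0 : nth 0%N nu i0 = b by rewrite /nu nth_sact sbarV sbar_i.
have nth_nu1 : nth 0%N nu (ordS i0) = a by rewrite /nu nth_sact sbarV /sbar tpermR.
have Eas : forall mh, perm_eq mh lambda ->
    asep_prob rho chi t mh sigmah mu (lmul i0 sigmah) =
    (if mh == mu then al else 0) + (if mh == nu then be else 0).
  move=> mh hmh.
  have szmh : size mh = n by rewrite (perm_size hmh).
  have hf : (lmul i0 sigmah == sigmah) = false := negbTE (lmul_neq hasc).
  rewrite /asep_prob hf andbF add0r (bigD1 i0) // big1 ?addr0; last first.
    move=> j /andP[hj nj].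
    have hne : (lmul i0 sigmah == lmul j sigmah) = false.
      apply/eqP => e; move/eqP: nj; apply.
      by rewrite (lmul_uniq hasc hj e).
    by cbv beta zeta; rewrite !hne !andbF; case: ifP => _; rewrite ?addr0.
  have emu : (mu == sact (sbar i0) mh) = (mh == nu).
    apply/eqP/eqP => e.
      by rewrite /nu e sact_sbarK.
    by rewrite e /nu sact_sbarK.
  cbv beta zeta; rewrite eqxx !andbT emu [mu == mh]eq_sym -/p.
  case: (eqVneq mh mu) => [Emh|Nmu].
    rewrite Emh -/a -/b /al /be.
    case: (eqVneq a b) => [Eab|Nab] /=.
      by case: (mu == nu); rewrite !addr0.
    have -> : (mu == nu) = false.
      apply/negbTE; apply: contra_neq Nab => e.
      by rewrite /a e nth_nu0.
    by rewrite add0r addr0.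
  case: (eqVneq mh nu) => [Enu|Nnu].
    rewrite Enu nth_nu0 nth_nu1 /be.
    case: (eqVneq a b) => [Eab|Nab] /=.
      by [].
    by rewrite !addr0 add0r.
  by case: ifP => _; rewrite /= ?addr0 ?add0r.
set x := spt chi sigmah.
rewrite (eq_big_seq (fun mh => (if mh == mu then (al%:C)%C else 0) * evalF (t%:C)%C x (F mh)
                       + (if mh == nu then (be%:C)%C else 0) * evalF (t%:C)%C x (F mh))); last first.
  move=> mh; rewrite mem_permutations => hmh.
  rewrite Eas // rmorphD -mulrDl; congr (_ * _).
  by congr (_ + _); case: ifP => _ //; rewrite rmorph0.
rewrite big_split /= !sum_pick ?mem_permutations // Eaux.
have hy : forall k, spt chi (lmul i0 sigmah) k = x (sbar i0 k).
  by move=> k; rewrite /spt /x /lmul invMg permM sbarV.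
rewrite (evalF_ext t (F mu) hy).
set x' := (fun k => x (sbar i0 k)).
set c := (t%:C)%C.
set u := x i0.
set v := x (ordS i0).
have [hne _] := hpf _ _ hasc.
have K0r : p * (t * chi (sigmah^-1%g i0) - chi (sigmah^-1%g (ordS i0)))
       = chi (sigmah^-1%g i0) - chi (sigmah^-1%g (ordS i0)) by rewrite /p /pfun divfK.
clearbody p.
have K0 : (p%:C)%C * (c * u - v) = u - v.
  have := congr1 (real_complex R) K0r.
  rewrite rmorphM !rmorphB rmorphM; exact.
have hn : c * u - v != 0.
  have : ((t * chi (sigmah^-1%g i0) - chi (sigmah^-1%g (ordS i0)))%:C)%C != 0 by rewrite fmorph_eq0.
  rewrite rmorphB rmorphM; exact.
rewrite /al /be /ff.
have hFmu := regF _ Hmu.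
have hFnu := regF _ nuP.
have ex'x : forall k, x' (sbar i0 k) = x k by move=> k; rewrite /x' /sbar tpermK.
case: (ltngtP a b) => hab /=.
- have T := HT mu i0 Hmu hab.
  have E := Trel_eval x hFmu hFnu T.
  rewrite -/x' in E.
  have := alg_lt K0 hn E.
  rewrite !rmorphM !rmorphB !rmorph1 => <-.
  by ring.
- have T : Trel i0 (F nu) (F mu).
    have := HT nu i0 nuP; rewrite nth_nu0 nth_nu1 /nu sact_sbarK // => h; exact: h hab.
  have E1 := Trel_eval x hFnu hFmu T.
  have E2 := Trel_eval x' hFnu hFmu T.
  rewrite -/x' in E1.
  have hx0 : x' i0 = v by rewrite /x' sbar_i.
  have hx1 : x' (ordS i0) = u by rewrite /x' /sbar tpermR.
  rewrite hx0 hx1 (evalF_ext t (F nu) ex'x) in E2.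
  case: (eqVneq u v) => [Euv|Nuv].
    have p0 : (p%:C)%C = 0.
      move: K0 hn; rewrite Euv subrr => K0' hn'.
      by move/eqP: K0'; rewrite mulf_eq0 (negbTE hn') orbF => /eqP.
    have eA : evalF c x' (F mu) = evalF c x (F mu).
      apply: evalF_ext => k; rewrite /x' /sbar; case: tpermP => [->|->|] //.
    have p0r : p = 0 by apply: complexI; rewrite p0.
    rewrite eA p0r ?mulr1 ?subr0 ?mulr1 ?mulr0 ?mul0r ?rmorph0 ?mul0r ?addr0 mulrC.
    by [].
  have Nuv' : u - v != 0 by rewrite subr_eq0.
  have := alg_gt K0 Nuv' E1 E2.
  rewrite !rmorphM !rmorphB !rmorph1 => <-.
  by ring.
- have hS := HS mu i0 Hmu hab.
  have [_ ep] := evalF_pact x (sbar i0) hFmu.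
  rewrite hS sbarV -/x' in ep.
  by rewrite ep rmorph0 mul0r addr0 mulrC.
Qed.
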